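(* There exists $\beta_2(d)>0$ such that if $|\beta|\le\beta_2(d)$, then for every non-null loop sequence $s$, $$\sum_{X\in\mathcal{X}(s)}|w_\beta(X)|<\infty.$$
   Context: Lattice, paths and loops. $E$ is the set of directed nearest-neighbour edges of $\mathbb{Z}^d$ ($d\ge2$); $e$ goes from $u(e)$ to $v(e)$, $e^{-1}$ is the reversed edge; $e$ is positively oriented if $v(e)$ is lexicographically larger than $u(e)$. A path is a sequence $e_1\cdots e_n$ with $v(e_i)=u(e_{i+1})$, closed if $v(e_n)=u(e_1)$; the null path is closed. Cycles are classes of closed paths under cyclic rotation; each cycle has a first edge fixed by an arbitrary rule and ''location $k$'' is its $k$-th edge. A path has a backtrack at $i\le n-1$ if $e_{i+1}=e_i^{-1}$; a closed path also at $n$ if $e_1=e_n^{-1}$; erasing a backtrack at $i<n$ gives $e_1\cdots e_{i-1}e_{i+2}\cdots e_n$, at $n$ gives $e_2\cdots e_{n-1}$; successive erasures until none remain give a well-defined cycle $[l]$. A loop is a cycle without backtracks (including the null loop). A plaquette is a nonbacktracking closed path of length 4. Loop sequences: finite sequences of loops modulo inserting/deleting null loops; minimal representation has no null loops; $|s|=\sum|l_i|$. Operations. For non-null loops $l,l'$ and locations $x,y$: same edge $e$: $l=aeb$, $l'=ced$, $l\oplus_{x,y}l'=[aedceb]$, $l\ominus_{x,y}l'=[ac^{-1}d^{-1}b]$; $e$ vs $e^{-1}$: $l=aeb$, $l'=ce^{-1}d$, $l\oplus_{x,y}l'=[aec^{-1}d^{-1}eb]$, $l\ominus_{x,y}l'=[adcb]$.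 Positive/negative deformations of $l$: $l\oplus_{x,y}p$, $l\ominus_{x,y}p$ for plaquettes $p$ containing the edge at location $x$ of $l$ or its inverse. Distinct locations $x,y$: $l=aebec$ (displayed $e$'s at $x,y$ respectively) gives the positive splitting $([aec],[be])$; $l=aebe^{-1}c$ gives the negative splitting $([ac],[b])$. A deformation (splitting) of a loop sequence replaces one component of its minimal representation by a deformation (by the two loops of a splitting) of it. Trajectories. A trajectory is a sequence $(s_0,s_1,\dots)$ of loop sequences with each $s_{i+1}$ a deformation or splitting of $s_i$; vanishing trajectories are finite and end at the null loop sequence; $\mathcal{X}(s)$ is the set of vanishing trajectories starting at $s$. $w_\beta(s,s')=-\beta/|s|$, $\beta/|s|$, $-1/|s|$, $1/|s|$ for positive deformation, negative deformation, positive splitting, negative splitting respectively; $w_\beta(X)=\prod w_\beta(s_i,s_{i+1})$. *)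

(* Defs.v *)
From Stdlib Require Import Reals ZArith List Relations.
Import ListNotations.
Open Scope R_scope.

(** Directed nearest-neighbour edges of Z^d: an edge is given by its start
    vertex [src] (a point of Z^d, a list of d integers), a coordinate
    direction [dir] (< d) and a sign [pos] (true: +1, false: -1). *)
Record edge := mkEdge { src : list Z; dir : nat; pos : bool }.

Definition edge_ok (d : nat) (e : edge) : Prop :=
  length (src e) = d /\ (dir e < d)%nat.

Fixpoint shift (v : list Z) (i : nat) (b : bool) : list Z :=
  match v, i with
  | [], _ => []
  | x :: v', O => (if b then (x + 1)%Z else (x - 1)%Z) :: v'
  | x :: v', S i' => x :: shift v' i' b
  end.

Definition tgt (e : edge) : list Z := shift (src e) (dir e) (pos e).

Definition inv (e : edge) : edge := mkEdge (tgt e) (dir e) (negb (pos e)).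

Fixpoint is_path (p : list edge) : Prop :=
  match p with
  | e1 :: ((e2 :: _) as t) => tgt e1 = src e2 /\ is_path t
  | _ => True
  end.

Definition closed_path (d : nat) (p : list edge) : Prop :=
  Forall (edge_ok d) p /\ is_path p /\
  match p with [] => True | e :: _ => tgt (last p e) = src e end.

Definition rev_inv (p : list edge) : list edge := rev (map inv p).

(** One backtrack erasure of a closed path: at i < n, or at n
    (when e_1 = e_n^{-1}, giving e_2 ... e_{n-1}). *)
Definition erase1 (p q : list edge) : Prop :=
  (exists a e b, p = a ++ e :: inv e :: b /\ q = a ++ b) \/
  (exists e m, p = inv e :: m ++ [e] /\ q = m).

Definition no_backtrack (p : list edge) : Prop := ~ exists q, erase1 p q.

Definition reduce (p q : list edge) : Prop :=
  clos_refl_trans _ erase1 p q /\ no_backtrack q.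

Definition rot_eq (p q : list edge) : Prop :=
  exists a b, p = a ++ b /\ q = b ++ a.

(** a loop (representative of a cycle without backtracks); [] = null loop *)
Definition is_loop (d : nat) (l : list edge) : Prop :=
  closed_path d l /\ no_backtrack l.

Definition plaquette (d : nat) (p : list edge) : Prop :=
  closed_path d p /\ no_backtrack p /\ length p = 4%nat.

(** loop sequences, in minimal representation (no null loops) *)
Definition lseq := list (list edge).

Definition is_lseq (d : nat) (s : lseq) : Prop :=
  Forall (fun l => is_loop d l /\ l <> []) s.

Definition lsize (s : lseq) : nat := fold_right (fun l n => (length l + n)%nat) 0%nat s.

Definition ls_eq (s t : lseq) : Prop := Forall2 rot_eq s t.

Definition plus_op (l l' r : list edge) : Prop :=
  (exists a e b c dd, l = a ++ e :: b /\ l' = c ++ e :: dd /\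
      reduce (a ++ e :: dd ++ c ++ e :: b) r) \/
  (exists a e b c dd, l = a ++ e :: b /\ l' = c ++ inv e :: dd /\
      reduce (a ++ e :: rev_inv c ++ rev_inv dd ++ e :: b) r).

Definition minus_op (l l' r : list edge) : Prop :=
  (exists a e b c dd, l = a ++ e :: b /\ l' = c ++ e :: dd /\
      reduce (a ++ rev_inv c ++ rev_inv dd ++ b) r) \/
  (exists a e b c dd, l = a ++ e :: b /\ l' = c ++ inv e :: dd /\
      reduce (a ++ dd ++ c ++ b) r).

Definition pos_def (d : nat) (l r : list edge) : Prop :=
  exists p, plaquette d p /\ plus_op l p r.
Definition neg_def (d : nat) (l r : list edge) : Prop :=
  exists p, plaquette d p /\ minus_op l p r.

(** splittings at two distinct locations x, y (locations read cyclically,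
    i.e. on any rotation of the representative) *)
Definition pos_split (l r1 r2 : list edge) : Prop :=
  exists l0 a e b c, rot_eq l l0 /\ l0 = a ++ e :: b ++ e :: c /\
    reduce (a ++ e :: c) r1 /\ reduce (b ++ [e]) r2.
Definition neg_split (l r1 r2 : list edge) : Prop :=
  exists l0 a e b c, rot_eq l l0 /\ l0 = a ++ e :: b ++ inv e :: c /\
    reduce (a ++ c) r1 /\ reduce b r2.

(** drop a null loop (passage to the minimal representation) *)
Definition nn (r : list edge) : lseq := match r with [] => [] | _ => [r] end.

Inductive kind := PosDef | NegDef | PosSplit | NegSplit.

Definition step (d : nat) (k : kind) (s s' : lseq) : Prop :=
  exists s1 l s2, s = s1 ++ l :: s2 /\
  match k with
  | PosDef => exists r, pos_def d l r /\ ls_eq s' (s1 ++ nn r ++ s2)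
  | NegDef => exists r, neg_def d l r /\ ls_eq s' (s1 ++ nn r ++ s2)
  | PosSplit => exists r1 r2, pos_split l r1 r2 /\ ls_eq s' (s1 ++ nn r1 ++ nn r2 ++ s2)
  | NegSplit => exists r1 r2, neg_split l r1 r2 /\ ls_eq s' (s1 ++ nn r1 ++ nn r2 ++ s2)
  end.

(** A trajectory starting at s0 is recorded as the list of its steps
    (kind of step, next loop sequence). *)
Fixpoint vanishing (d : nat) (s : lseq) (st : list (kind * lseq)) : Prop :=
  match st with
  | [] => s = []
  | (k, s') :: st' => step d k s s' /\ vanishing d s' st'
  end.

Definition w (beta : R) (k : kind) (s : lseq) : R :=
  match k with
  | PosDef => - beta / INR (lsize s)
  | NegDef => beta / INR (lsize s)
  | PosSplit => - 1 / INR (lsize s)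
  | NegSplit => 1 / INR (lsize s)
  end.

Fixpoint traj_weight (beta : R) (s : lseq) (st : list (kind * lseq)) : R :=
  match st with
  | [] => 1
  | (k, s') :: st' => w beta k s * traj_weight beta s' st'
  end.

Fixpoint traj_eq (t1 t2 : list (kind * lseq)) : Prop :=
  match t1, t2 with
  | [], [] => True
  | (k1, s1) :: u1, (k2, s2) :: u2 => k1 = k2 /\ ls_eq s1 s2 /\ traj_eq u1 u2
  | _, _ => False
  end.

(** sum_{X in X(s)} |w_beta(X)| < infinity : the partial sums over finite
    sets of distinct vanishing trajectories from s are bounded. *)
Definition summable_traj (d : nat) (beta : R) (s : lseq) : Prop :=
  exists B : R, forall L : list (list (kind * lseq)),
    (forall st, In st L -> vanishing d s st) ->
    ForallOrdPairs (fun t1 t2 => ~ traj_eq t1 t2) L ->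
    fold_right (fun st acc => Rabs (traj_weight beta s st) + acc) 0 L <= B.

(* Main.v *)
Require Import Defs.
From Stdlib Require Import Reals List.
From Stdlib Require Import ZArith Relations Lia Lra ClassicalEpsilon.
Import ListNotations.
Open Scope R_scope.

Lemma edge_eq_dec : forall x y : edge, {x = y} + {x <> y}.
Proof.
  decide equality. apply Bool.bool_dec. apply Nat.eq_dec. apply (list_eq_dec Z.eq_dec).
Qed.
Arguments inv : simpl never.
Arguments tgt : simpl never.

Lemma shift_shift : forall v i b, Defs.shift (Defs.shift v i b) i (negb b) = v.
Proof.
  induction v as [|x v IH]; intros i b; simpl; auto.
  destruct i; simpl.
  - destruct b; simpl; f_equal; lia.
  - rewrite IH; auto.
Qed.

Lemma tgt_inv : forall e, tgt (inv e) = src e.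
Proof. intros [s i b]; unfold tgt, inv; simpl. apply shift_shift. Qed.

Lemma inv_inv : forall e, inv (inv e) = e.
Proof.
  intros [s i b]. unfold inv at 1. simpl. rewrite tgt_inv. simpl.
  rewrite Bool.negb_involutive. reflexivity.
Qed.

Lemma inv_neq : forall e, inv e <> e.
Proof. intros [s i b] H. unfold inv in H. injection H. destruct b; discriminate. Qed.

Lemma inv_eq_sym : forall x y, x = inv y -> y = inv x.
Proof. intros x y ->. now rewrite inv_inv. Qed.

Fixpoint red (w : list edge) : Prop :=
  match w with
  | x :: ((y :: _) as r) => y <> inv x /\ red r
  | _ => True
  end.

Definition push (x : edge) (v : list edge) : list edge :=
  match v with
  | [] => [x]
  | y :: r => if edge_eq_dec y (inv x) then r else x :: y :: r
  end.

Definition fr (q : list edge) : list edge := fold_right push [] q.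

Definition pushr (v : list edge) (x : edge) : list edge :=
  match v with
  | [] => [x]
  | _ => if edge_eq_dec (last v x) (inv x) then removelast v else v ++ [x]
  end.

Lemma red_tail : forall x v, red (x :: v) -> red v.
Proof. intros x [|y v] H; simpl in *; tauto. Qed.

Lemma red_push : forall x v, red v -> red (push x v).
Proof.
  intros x [|y v] H; simpl; auto.
  destruct (edge_eq_dec y (inv x)); simpl.
  - eapply red_tail; eauto.
  - split; auto.
Qed.

Lemma fr_red : forall q, red (fr q).
Proof. induction q; simpl; auto. apply red_push; auto. Qed.

Lemma fr_id : forall v, red v -> fr v = v.
Proof.
  induction v as [|x v IH]; intros H; simpl; auto.
  rewrite IH by (eapply red_tail; eauto).
  destruct v as [|y v]; simpl; auto.
  destruct (edge_eq_dec y (inv x)); simpl in H; tauto.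
Qed.

Lemma red_app_l : forall a b, red (a ++ b) -> red a.
Proof.
  induction a as [|x a IH]; intros b H; simpl; auto.
  destruct a as [|y a]; simpl in *; auto.
  destruct H; split; auto. apply (IH b); auto.
Qed.

Lemma red_app_r : forall a b, red (a ++ b) -> red b.
Proof.
  induction a as [|x a IH]; intros b H; simpl in *; auto.
  apply IH. eapply red_tail; eauto.
Qed.

Lemma red_snoc : forall v z, red v -> (forall m y, v = m ++ [y] -> y <> inv z) -> red (v ++ [z]).
Proof.
  induction v as [|x v IH]; intros z H Hl; simpl; auto.
  destruct v as [|y v]; simpl.
  - split; auto. intro E. apply (Hl [] x); auto. apply inv_eq_sym; auto.
  - simpl in H. destruct H as [H1 H2]. split; auto.
    apply IH; auto. intros m y' E. apply (Hl (x :: m)). rewrite E. auto.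
Qed.

Lemma fr_app : forall a b, fr (a ++ b) = fold_right push (fr b) a.
Proof. intros. unfold fr. apply fold_right_app. Qed.

Lemma push_cancel : forall e v, red v -> push e (push (inv e) v) = v.
Proof.
  intros e [|y v] H; simpl.
  - destruct (edge_eq_dec (inv e) (inv e)); [auto|congruence].
  - destruct (edge_eq_dec y (inv (inv e))).
    + rewrite inv_inv in e0. subst y. destruct v as [|z v]; simpl; auto.
      destruct (edge_eq_dec z (inv e)); simpl in H; [tauto|auto].
    + simpl. destruct (edge_eq_dec (inv e) (inv e)); [auto|congruence].
Qed.

Lemma fr_erase : forall a e b, fr (a ++ e :: inv e :: b) = fr (a ++ b).
Proof.
  intros. rewrite !fr_app. f_equal. simpl. apply push_cancel. apply fr_red.
Qed.

Ltac dec := repeat match goal with |- context [edge_eq_dec ?a ?b] => destruct (edge_eq_dec a b) end.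

Lemma pushr_snoc : forall v0 l x, pushr (v0 ++ [l]) x = if edge_eq_dec l (inv x) then v0 else v0 ++ [l; x].
Proof.
  intros. unfold pushr. destruct (v0 ++ [l]) eqn:E.
  - destruct v0; discriminate.
  - rewrite <- E. rewrite last_last, removelast_last. dec; auto. rewrite <- app_assoc; auto.
Qed.

Lemma push_pushr : forall y v x, push y (pushr v x) = pushr (push y v) x.
Proof.
  intros y v x. destruct v as [|h v1].
  - simpl. destruct (edge_eq_dec x (inv y)); destruct (edge_eq_dec y (inv x)).
    + auto.
    + exfalso. apply n. apply inv_eq_sym; auto.
    + exfalso. apply n. apply inv_eq_sym; auto.
    + auto.
  - destruct (exists_last (l:=h::v1) ltac:(discriminate)) as [v0 [l E]].
    rewrite E.
    destruct v0 as [|h0 v0'].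
    + simpl in E. injection E; intros; subst.
      simpl.
      destruct (edge_eq_dec l (inv x)) as [Hx|Hx]; destruct (edge_eq_dec l (inv y)) as [Hy|Hy];
        simpl; unfold pushr; simpl; dec; try congruence.
      subst. assert (x = y) by (rewrite <- (inv_inv x), <- (inv_inv y); congruence). subst. auto.
    + rewrite pushr_snoc.
      change ((h0 :: v0') ++ [l]) with (h0 :: (v0' ++ [l])). simpl push.
      destruct (edge_eq_dec l (inv x)) as [Hx|Hx]; destruct (edge_eq_dec h0 (inv y)) as [Hy|Hy].
      * destruct v0' as [|z w].
        -- simpl. unfold pushr; dec; congruence.
        -- change (z :: w ++ [l]) with ((z :: w) ++ [l]). rewrite pushr_snoc. unfold push; dec; congruence.
      * change (y :: h0 :: v0' ++ [l]) with ((y :: h0 :: v0') ++ [l]). rewrite pushr_snoc. unfold push; dec; congruence.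
      * destruct v0' as [|z w].
        -- simpl. unfold pushr; dec; congruence.
        -- change (z :: w ++ [l]) with ((z :: w) ++ [l]). rewrite pushr_snoc. unfold push; dec; try congruence.
      * change (y :: h0 :: v0' ++ [l]) with ((y :: h0 :: v0') ++ [l]). rewrite pushr_snoc. unfold push; dec; try congruence.
        all: try reflexivity; try (simpl; rewrite <- app_assoc; auto).
Qed.

Lemma fr_snoc : forall q x, fr (q ++ [x]) = pushr (fr q) x.
Proof.
  induction q as [|y q IH]; intros x; simpl; auto.
  rewrite IH. apply push_pushr.
Qed.

Fixpoint cc_f (n : nat) (w : list edge) : list edge :=
  match n with
  | O => w
  | S n' => match w with
    | y :: ((_ :: _) as r) => if edge_eq_dec y (inv (last r y)) then cc_f n' (removelast r) else w
    | _ => w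
    end
  end.

Definition cc (w : list edge) := cc_f (length w) w.
Definition cred (q : list edge) := cc (fr q).

Lemma removelast_len : forall (r : list edge), length (removelast r) = pred (length r).
Proof.
  intros r. destruct r as [|x r']. auto.
  destruct (exists_last (l:=x::r') ltac:(discriminate)) as [r0 [z E]]. rewrite E.
  rewrite removelast_last, length_app. simpl. lia.
Qed.

Lemma cc_f_fuel : forall n m w, (length w <= n)%nat -> (length w <= m)%nat -> cc_f n w = cc_f m w.
Proof.
  induction n as [|n IH]; intros m w Hn Hm.
  - destruct w; simpl in Hn; [|lia]. destruct m; auto.
  - destruct m as [|m].
    + destruct w; simpl in Hm; [|lia]. auto.
    + simpl. destruct w as [|y [|z r]]; auto.
      destruct (edge_eq_dec y (inv (last (z :: r) y))); auto.
      apply IH; rewrite removelast_len; simpl in *; lia.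
Qed.

Lemma cc_strip : forall z m, cc (inv z :: m ++ [z]) = cc m.
Proof.
  intros z m. unfold cc. simpl length. rewrite length_app. simpl.
  destruct (m ++ [z]) as [|u r] eqn:E.
  - destruct m; discriminate.
  - rewrite <- E. rewrite last_last, removelast_last.
    destruct (edge_eq_dec (inv z) (inv z)); [|congruence].
    apply cc_f_fuel; lia.
Qed.

Lemma cc_f_S : forall n y u r, cc_f (S n) (y :: u :: r) =
  if edge_eq_dec y (inv (last (u::r) y)) then cc_f n (removelast (u::r)) else y :: u :: r.
Proof. reflexivity. Qed.

Lemma cc_id : forall w, (forall z m, w <> inv z :: m ++ [z]) -> cc w = w.
Proof.
  intros w H. unfold cc. destruct w as [|y [|u r]]; try reflexivity.
  simpl length. rewrite cc_f_S.
  destruct (edge_eq_dec y (inv (last (u :: r) y))) as [E|E]; auto.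
  exfalso. destruct (exists_last (l:=u::r) ltac:(discriminate)) as [r0 [z Er]].
  apply (H z r0). rewrite <- Er. rewrite E. rewrite Er, last_last. auto.
Qed.

Lemma cc_f_len : forall n w, (length (cc_f n w) <= length w)%nat.
Proof.
  induction n as [|n IH]; intros w; simpl; auto.
  destruct w as [|y [|u r]]; auto.
  destruct (edge_eq_dec y (inv (last (u :: r) y))); auto.
  eapply Nat.le_trans. apply IH. rewrite removelast_len. simpl. lia.
Qed.

Lemma push_len : forall x v, (length (push x v) <= S (length v))%nat.
Proof. intros x [|y v]; simpl; auto. destruct (edge_eq_dec y (inv x)); simpl; lia. Qed.

Lemma fr_len : forall q, (length (fr q) <= length q)%nat.
Proof. induction q; simpl; auto. eapply Nat.le_trans. apply push_len. simpl; lia. Qed.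

Lemma cred_len : forall q, (length (cred q) <= length q)%nat.
Proof. intros. unfold cred, cc. eapply Nat.le_trans. apply cc_f_len. apply fr_len. Qed.

Lemma rot_refl : forall p, rot_eq p p.
Proof. intros p. exists p, []. rewrite app_nil_r. auto. Qed.

Lemma rot_sym : forall p q, rot_eq p q -> rot_eq q p.
Proof. intros p q [a [b [-> ->]]]. exists b, a. auto. Qed.

Lemma rot_app : forall a b, rot_eq (a ++ b) (b ++ a).
Proof. intros a b. exists a, b. auto. Qed.

Lemma rot_trans : forall p q r, rot_eq p q -> rot_eq q r -> rot_eq p r.
Proof.
  intros p q r [a [b [-> E]]] [c [d [E2 ->]]]. rewrite E in E2.
  apply app_eq_app in E2. destruct E2 as [l [[-> ->]|[-> ->]]].
  - (* b = c ++ l, d = l ++ a *) exists (a ++ c), l. rewrite !app_assoc. auto.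
  - (* c = b ++ l, a = l ++ d *) exists l, (d ++ b). rewrite !app_assoc. auto.
Qed.

Lemma rot_len : forall p q, rot_eq p q -> length p = length q.
Proof. intros p q [a [b [-> ->]]]. rewrite !length_app. lia. Qed.

Lemma rot_nil : forall q, rot_eq [] q -> q = [].
Proof. intros q [a [b [E ->]]]. destruct a, b; try discriminate. auto. Qed.

Lemma L1rot : forall z m, red (z :: m) -> red (m ++ [z]) ->
  cc (z :: m) = z :: m /\ cc (m ++ [z]) = m ++ [z].
Proof.
  intros z m H1 H2. split; apply cc_id; intros y m' E.
  - injection E; intros E1 E2. subst z m.
    rewrite <- app_assoc in H2. apply red_app_r in H2.
    simpl in H2. destruct H2 as [H2 _]. apply H2. auto.
  - destruct m as [|u m].
    + simpl in E. injection E; intros E1 E2. destruct m'; discriminate.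
    + simpl in E. injection E; intros E1 E2. subst u.
      assert (z = y).
      { assert (Hl : last (m ++ [z]) z = last (m' ++ [y]) z) by (rewrite E1; auto).
        rewrite !last_last in Hl. auto. }
      subst. simpl in H1. destruct H1 as [H1 _]. apply H1. auto.
Qed.

Lemma red_cons : forall x v, red v -> (forall h r, v = h :: r -> h <> inv x) -> red (x :: v).
Proof. intros x [|h r] H Hh; simpl; auto. split; auto. eapply Hh; eauto. Qed.

Lemma push_ne : forall x h r, h <> inv x -> push x (h :: r) = x :: h :: r.
Proof. intros. simpl. destruct (edge_eq_dec h (inv x)); congruence. Qed.
Lemma push_eq : forall x r, push x (inv x :: r) = r.
Proof. intros. simpl. destruct (edge_eq_dec (inv x) (inv x)); congruence. Qed.

Lemma rot_one : forall z q, rot_eq (cred (z :: q)) (cred (q ++ [z])).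
Proof.
  intros z q. unfold cred. rewrite fr_snoc. simpl fr. assert (Hv := fr_red q).
  destruct (fr q) as [|h v1] eqn:Ev.
  - simpl. apply rot_refl.
  - destruct (edge_eq_dec h (inv z)) as [Hh|Hh].
    + subst h. rewrite push_eq.
      destruct v1 as [|u v1'].
      * unfold pushr. simpl. destruct (edge_eq_dec (inv z) (inv z)); [|congruence]. simpl. apply rot_refl.
      * destruct (exists_last (l:=u::v1') ltac:(discriminate)) as [m [l El]]. rewrite El in *.
        change (inv z :: m ++ [l]) with ((inv z :: m) ++ [l]). rewrite pushr_snoc.
        destruct (edge_eq_dec l (inv z)) as [Hl|Hl].
        -- subst l. destruct (L1rot (inv z) m) as [A B].
           ++ change (inv z :: m ++ [inv z]) with ((inv z :: m) ++ [inv z]) in Hv. eapply red_app_l; eauto.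
           ++ eapply red_tail; eauto.
           ++ rewrite A, B. apply (rot_app m [inv z]).
        -- replace ((inv z :: m) ++ [l; z]) with (inv z :: (m ++ [l]) ++ [z]) by (simpl; rewrite <- app_assoc; auto). rewrite cc_strip. apply rot_refl.
    + rewrite push_ne by auto.
      destruct (exists_last (l:=h::v1) ltac:(discriminate)) as [v0 [l El]]. rewrite El in *.
      rewrite pushr_snoc.
      destruct (edge_eq_dec l (inv z)) as [Hl|Hl].
      * subst l. rewrite <- (inv_inv z) at 1. rewrite cc_strip. apply rot_refl.
      * destruct (L1rot z (v0 ++ [l])) as [A B].
        -- apply red_cons; auto. intros h' r E. rewrite <- El in E. injection E; intros; subst; auto.
        -- apply red_snoc; auto. intros m y E. apply app_inj_tail in E. destruct E; subst; auto.
        -- rewrite A. rewrite <- app_assoc in B. simpl in B. rewrite B.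
           replace (v0 ++ [l; z]) with ((v0 ++ [l]) ++ [z]) by (rewrite <- app_assoc; auto). apply (rot_app [z] (v0 ++ [l])).
Qed.

Lemma cred_rot : forall p q, rot_eq p q -> rot_eq (cred p) (cred q).
Proof.
  intros p q [a [b [-> ->]]]. revert b. induction a as [|z a IH]; intros b.
  - rewrite app_nil_r. apply rot_refl.
  - simpl. eapply rot_trans. apply rot_one.
    rewrite <- app_assoc. eapply rot_trans. apply IH.
    rewrite <- app_assoc. simpl. apply rot_refl.
Qed.

Lemma cred_erase : forall p p', erase1 p p' -> rot_eq (cred p) (cred p').
Proof.
  intros p p' [[a [e [b [-> ->]]]]|[e [m [-> ->]]]].
  - unfold cred. rewrite fr_erase. apply rot_refl.
  - unfold cred. simpl fr. rewrite fr_snoc. assert (Hv := fr_red m).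
    destruct (fr m) as [|h v1] eqn:Ev.
    + change (pushr [] e) with [e]. unfold push. rewrite inv_inv. destruct (edge_eq_dec e e); [apply rot_refl|congruence].
    + destruct (exists_last (l:=h::v1) ltac:(discriminate)) as [v0 [l El]].
      rewrite El. rewrite pushr_snoc.
      destruct (edge_eq_dec l (inv e)) as [Hl|Hl]; destruct (edge_eq_dec h e) as [Hh|Hh].
      * subst. destruct v0 as [|h0 v0'].
        -- simpl in El. injection El; intros; subst. exfalso. eapply inv_neq; eauto.
        -- simpl in El. injection El; intros E1 E2; subst h0.
           assert (push (inv e) (e :: v0') = v0') as -> by (unfold push; rewrite inv_inv; destruct (edge_eq_dec e e); congruence).
           replace ((e :: v0') ++ [inv e]) with (inv (inv e) :: v0' ++ [inv e]) by (rewrite inv_inv; auto). rewrite cc_strip. apply rot_refl.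
      * subst l. assert (push (inv e) v0 = inv e :: v0) as ->.
        { destruct v0 as [|h0 v0']; auto. simpl in El. injection El; intros; subst.
          apply push_ne. rewrite inv_inv. auto. }
        destruct (L1rot (inv e) v0) as [A B].
        -- apply red_cons. rewrite El in Hv. eapply red_app_l; eauto.
           intros h' r E. subst. simpl in El. injection El; intros; subst. rewrite inv_inv; auto.
        -- rewrite <- El; auto.
        -- rewrite A, B. apply rot_sym. apply (rot_app v0 [inv e]).
      * subst h. replace (v0 ++ [l; e]) with ((v0 ++ [l]) ++ [e]) by (rewrite <- app_assoc; auto).
        rewrite <- El. simpl app.
        assert (push (inv e) (e :: v1 ++ [e]) = v1 ++ [e]) as -> by (unfold push; rewrite inv_inv; destruct (edge_eq_dec e e); congruence).
        destruct (L1rot e v1) as [A B].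
        -- auto.
        -- apply red_snoc. eapply red_tail; eauto.
           intros mm y E. destruct v1 as [|u v1'].
           ++ destruct mm; discriminate.
           ++ assert (h'': e :: u :: v1' = (e :: mm) ++ [y]) by (rewrite E; auto).
              rewrite El in h''. apply app_inj_tail in h''. destruct h''. subst. auto.
        -- rewrite A, B. apply (rot_app v1 [e]).
      * replace (v0 ++ [l; e]) with ((v0 ++ [l]) ++ [e]) by (rewrite <- app_assoc; auto).
        rewrite <- El. simpl app. rewrite push_ne by (rewrite inv_inv; auto).
        change (inv e :: h :: v1 ++ [e]) with (inv e :: (h :: v1) ++ [e]). rewrite cc_strip. apply rot_refl.
Qed.

Lemma nib_red : forall r, (forall a x b, r <> a ++ x :: inv x :: b) -> red r.
Proof.
  induction r as [|x r IH]; intros H; simpl; auto.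
  destruct r as [|y r]; auto. split.
  - intro E. apply (H [] x r). subst. auto.
  - apply IH. intros a z b E. apply (H (x :: a) z b). rewrite E. auto.
Qed.

Lemma nb_red : forall r, no_backtrack r -> red r.
Proof.
  intros r H. apply nib_red. intros a x b E. apply H. exists (a ++ b). left. exists a, x, b. auto.
Qed.

Lemma nb_cred : forall r, no_backtrack r -> cred r = r.
Proof.
  intros r H. unfold cred. rewrite fr_id by (apply nb_red; auto).
  apply cc_id. intros z m E. apply H. exists m. right. exists z, m. auto.
Qed.

Lemma crt_cred : forall x y, clos_refl_trans _ erase1 x y -> rot_eq (cred x) (cred y).
Proof.
  intros x y H. induction H.
  - apply cred_erase; auto.
  - apply rot_refl.
  - eapply rot_trans; eauto.
Qed.

Lemma reduce_cred : forall q r, reduce q r -> rot_eq r (cred q).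
Proof.
  intros q r [H Hn]. rewrite <- (nb_cred r Hn). apply rot_sym. apply crt_cred; auto.
Qed.

Lemma reduce_rot : forall q q' r, reduce q r -> rot_eq q q' -> rot_eq r (cred q').
Proof.
  intros. eapply rot_trans. apply reduce_cred; eauto. apply cred_rot; auto.
Qed.

Fixpoint decomps {A : Type} (l : list A) : list (list A * A * list A) :=
  match l with
  | [] => []
  | x :: r => ([], x, r) :: map (fun t => match t with (a, e, b) => (x :: a, e, b) end) (decomps r)
  end.

Lemma decomps_in : forall A (a : list A) e b, In (a, e, b) (decomps (a ++ e :: b)).
Proof.
  induction a as [|x a IH]; intros e b; simpl; auto.
  right. apply in_map_iff. exists (a, e, b). split; auto.
Qed.

Lemma decomps_eq : forall A (l : list A) a e b, In (a, e, b) (decomps l) -> l = a ++ e :: b.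
Proof.
  induction l as [|x l IH]; intros a e b H; simpl in H; [contradiction|].
  destruct H as [H|H].
  - injection H; intros; subst; auto.
  - apply in_map_iff in H. destruct H as [[[a' e'] b'] [E H]]. injection E; intros; subst.
    simpl. f_equal. apply IH; auto.
Qed.

Lemma decomps_len : forall A (l : list A), length (decomps l) = length l.
Proof. induction l; simpl; auto. rewrite length_map. auto. Qed.

Lemma ls_refl : forall s, ls_eq s s.
Proof. induction s; constructor; auto. apply rot_refl. Qed.

Lemma ls_sym : forall s t, ls_eq s t -> ls_eq t s.
Proof. intros s t H. induction H; constructor; auto. apply rot_sym; auto. Qed.

Lemma ls_trans : forall s t u, ls_eq s t -> ls_eq t u -> ls_eq s u.
Proof.
  intros s t u H. revert u. induction H; intros u H2; inversion H2; subst; constructor; auto.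
  eapply rot_trans; eauto. apply IHForall2. auto.
Qed.

Lemma ls_app : forall s1 s2 t1 t2, ls_eq s1 t1 -> ls_eq s2 t2 -> ls_eq (s1 ++ s2) (t1 ++ t2).
Proof. intros. apply Forall2_app; auto. Qed.

Lemma nn_rot : forall r r', rot_eq r r' -> ls_eq (nn r) (nn r').
Proof.
  intros r r' H. destruct r as [|x r].
  - rewrite (rot_nil _ H). constructor.
  - destruct r' as [|y r'].
    + apply rot_sym in H. apply rot_nil in H. discriminate.
    + simpl. constructor; auto.
Qed.

Definition out (d : nat) (v : list Z) : list edge :=
  flat_map (fun i => [mkEdge v i true; mkEdge v i false]) (seq 0 d).

Definition enum3 (d : nat) (v : list Z) : list (list edge) :=
  flat_map (fun e1 => flat_map (fun e2 => map (fun e3 => [e1; e2; e3]) (out d (tgt e2))) (out d (tgt e1))) (out d v).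

Lemma in_out : forall d e, (dir e < d)%nat -> In e (out d (src e)).
Proof.
  intros d [v i b] H. simpl in *. unfold out. apply in_flat_map. exists i. split.
  - apply in_seq. lia.
  - destruct b; simpl; auto.
Qed.

Lemma enum3_in : forall d v w1 w2 w3, src w1 = v -> src w2 = tgt w1 -> src w3 = tgt w2 ->
  (dir w1 < d)%nat -> (dir w2 < d)%nat -> (dir w3 < d)%nat -> In [w1; w2; w3] (enum3 d v).
Proof.
  intros. unfold enum3. apply in_flat_map. exists w1. split. subst v. apply in_out; auto.
  apply in_flat_map. exists w2. split. rewrite <- H0. apply in_out; auto.
  apply in_map_iff. exists w3. split; auto. rewrite <- H1. apply in_out; auto.
Qed.

Lemma enum3_len : forall d v w, In w (enum3 d v) -> length w = 3%nat.
Proof.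
  intros d v w H. unfold enum3 in H. apply in_flat_map in H. destruct H as [e1 [_ H]].
  apply in_flat_map in H. destruct H as [e2 [_ H]]. apply in_map_iff in H.
  destruct H as [e3 [<- _]]. auto.
Qed.

Lemma length_flat_map_const : forall A B (f : A -> list B) l n,
  (forall x, length (f x) = n) -> length (flat_map f l) = (length l * n)%nat.
Proof. induction l; intros; simpl; auto. rewrite length_app, H, (IHl n); auto. Qed.

Lemma out_len : forall d v, length (out d v) = (2 * d)%nat.
Proof.
  intros. unfold out. rewrite (length_flat_map_const _ _ _ _ 2); auto. rewrite length_seq. lia.
Qed.

Lemma enum3_length : forall d v, length (enum3 d v) = (2 * d * (2 * d * (2 * d)))%nat.
Proof.
  intros. unfold enum3. rewrite (length_flat_map_const _ _ _ _ (2 * d * (2 * d))).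
  - rewrite out_len; auto.
  - intros. rewrite (length_flat_map_const _ _ _ _ (2 * d)). rewrite out_len; auto.
    intros. rewrite length_map, out_len. auto.
Qed.

Lemma plaq_enum : forall d p c e dd, plaquette d p -> p = c ++ e :: dd -> In (dd ++ c) (enum3 d (tgt e)).
Proof.
  intros d p c e dd [[Hok [Hp Hc]] [_ Hl]] ->.
  rewrite Forall_forall in Hok.
  assert (Hd : forall x, In x (c ++ e :: dd) -> (dir x < d)%nat) by (intros x Hx; apply Hok; auto).
  destruct c as [|c1 [|c2 [|c3 [|c4 c]]]]; destruct dd as [|d1 [|d2 [|d3 [|d4 dd]]]];
    rewrite ?length_app in Hl; simpl in Hl; try lia; simpl in Hp, Hc, Hd |- *; apply enum3_in; try (apply Hd; tauto); intuition.
Qed.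

Ltac lsolve := repeat rewrite <- app_assoc; simpl; repeat rewrite <- app_assoc; simpl; split; auto.

Lemma rot_loc : forall (a b a2 b2 X : list edge), b ++ a = b2 ++ a2 -> rot_eq (a ++ X ++ b) (a2 ++ X ++ b2).
Proof.
  intros. eapply rot_trans. apply (rot_app a (X ++ b)).
  rewrite <- app_assoc, H. rewrite app_assoc. apply (rot_app (X ++ b2) a2).
Qed.

Lemma loc_rot : forall l l' a (e : edge) b, rot_eq l l' -> l = a ++ e :: b ->
  exists a2 b2, l' = a2 ++ e :: b2 /\ b ++ a = b2 ++ a2.
Proof.
  intros l l' a e b [x [y [E1 E2]]] E. subst l l'. apply app_eq_app in E.
  destruct E as [m [[-> E]|[-> ->]]].
  - destruct m as [|z m'].
    + simpl in E. subst y. exists [], (b ++ a). simpl. rewrite app_nil_r. split; auto. rewrite app_nil_r. auto.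
    + simpl in E. injection E; intros -> ->. exists (y ++ a), m'. lsolve.
  - exists m, (b ++ x). lsolve.
Qed.

Lemma split_rot : forall l' a0 (e e' : edge) b0 c0, rot_eq (a0 ++ e :: b0 ++ e' :: c0) l' ->
  (exists a c, l' = a ++ e :: b0 ++ e' :: c /\ c ++ a = c0 ++ a0) \/
  (exists a b c, l' = a ++ e' :: b ++ e :: c /\ c ++ a = b0 /\ b = c0 ++ a0).
Proof.
  intros. destruct (loc_rot _ _ a0 e (b0 ++ e' :: c0) H eq_refl) as [a2 [b2 [E1 E2]]].
  rewrite <- app_assoc in E2. simpl in E2. apply app_eq_app in E2.
  destruct E2 as [m [[-> ->]|[-> E]]].
  - right. exists m, (c0 ++ a0), b2. subst l'. lsolve.
  - destruct m as [|z m'].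
    + simpl in E. subst a2. right. exists [], (c0 ++ a0), b0. subst l'. rewrite app_nil_r. lsolve.
    + simpl in E. injection E; intros E3 ->. left. exists a2, m'. subst l'. lsolve.
Qed.

Definition defc (d : nat) (l : list edge) : list (kind * lseq) :=
  flat_map (fun t => match t with (a, e, b) =>
     map (fun w => (PosDef, nn (cred (a ++ e :: w ++ e :: b)))) (enum3 d (tgt e)) ++
     map (fun w => (PosDef, nn (cred (a ++ e :: rev_inv w ++ e :: b)))) (enum3 d (src e)) ++
     map (fun w => (NegDef, nn (cred (a ++ rev_inv w ++ b)))) (enum3 d (tgt e)) ++
     map (fun w => (NegDef, nn (cred (a ++ w ++ b)))) (enum3 d (src e)) end) (decomps l).

Definition spl4 (a : list edge) (x : edge) (b c : list edge) : list (kind * lseq) :=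
  [(PosSplit, nn (cred (a ++ x :: c)) ++ nn (cred (b ++ [x])));
   (PosSplit, nn (cred (b ++ [x])) ++ nn (cred (a ++ x :: c)));
   (NegSplit, nn (cred (a ++ c)) ++ nn (cred b));
   (NegSplit, nn (cred b) ++ nn (cred (a ++ c)))].

Definition splc (l : list edge) : list (kind * lseq) :=
  flat_map (fun t => match t with (a, x, r) =>
    flat_map (fun u => match u with (b, y, c) => spl4 a x b c end) (decomps r) end) (decomps l).

Definition lc (d : nat) (l : list edge) := defc d l ++ splc l.

Definition Cands (d : nat) (s : lseq) : list (kind * lseq) :=
  flat_map (fun t => match t with (t1, l, t2) =>
    map (fun kr => (fst kr, t1 ++ snd kr ++ t2)) (lc d l) end) (decomps s).

Lemma in_defc_gen : forall d a e b x,
  In x (map (fun w => (PosDef, nn (cred (a ++ e :: w ++ e :: b)))) (enum3 d (tgt e)) ++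
     map (fun w => (PosDef, nn (cred (a ++ e :: rev_inv w ++ e :: b)))) (enum3 d (src e)) ++
     map (fun w => (NegDef, nn (cred (a ++ rev_inv w ++ b)))) (enum3 d (tgt e)) ++
     map (fun w => (NegDef, nn (cred (a ++ w ++ b)))) (enum3 d (src e))) ->
  In x (lc d (a ++ e :: b)).
Proof.
  intros. unfold lc. apply in_or_app. left. unfold defc. apply in_flat_map.
  exists (a, e, b). split; auto. apply decomps_in.
Qed.

Lemma in_spl : forall d a x b y c z, In z (spl4 a x b c) -> In z (lc d (a ++ x :: b ++ y :: c)).
Proof.
  intros. unfold lc. apply in_or_app. right. unfold splc. apply in_flat_map.
  exists (a, x, b ++ y :: c). split. apply decomps_in.
  apply in_flat_map. exists (b, y, c). split; auto. apply decomps_in.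
Qed.

Lemma cover_fin : forall d s s' s1 s2 t1 t2 l' rs rs' k,
  ls_eq s' (s1 ++ rs ++ s2) -> ls_eq s1 t1 -> ls_eq s2 t2 -> ls_eq rs rs' ->
  In (k, rs') (lc d l') -> s = t1 ++ l' :: t2 ->
  exists c, In c (Cands d s) /\ fst c = k /\ ls_eq s' (snd c).
Proof.
  intros. exists (k, t1 ++ rs' ++ t2). split; [|split; auto].
  - unfold Cands. apply in_flat_map. exists (t1, l', t2). split.
    + subst s. apply decomps_in.
    + apply in_map_iff. exists (k, rs'). auto.
  - simpl. eapply ls_trans. eauto. apply ls_app; auto. apply ls_app; auto.
Qed.

Lemma rev_inv_app : forall a b, rev_inv (a ++ b) = rev_inv b ++ rev_inv a.
Proof. intros. unfold rev_inv. rewrite map_app, rev_app_distr. auto. Qed.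

Ltac nrm := repeat (rewrite <- app_assoc); simpl; repeat (rewrite <- app_assoc); simpl.

Ltac nrmin R := repeat (rewrite <- app_assoc in R); simpl in R; repeat (rewrite <- app_assoc in R); simpl in R.

Lemma coverage : forall d k s0 s s', ls_eq s0 s -> step d k s0 s' ->
  exists c, In c (Cands d s) /\ fst c = k /\ ls_eq s' (snd c).
Proof.
  intros d k s0 s s' Hs [s1 [l [s2 [E H]]]]. subst s0.
  apply Forall2_app_inv_l in Hs. destruct Hs as [t1 [u [H1 [H2 Es]]]].
  inversion H2 as [|? l' ? t2 Hll H3]; subst u; clear H2.
  destruct k.
  - destruct H as [r [[p [Hp Hpl]] Hs']].
    destruct Hpl as [[a [e [b [c [dd [El [Ep Hr]]]]]]]|[a [e [b [c [dd [El [Ep Hr]]]]]]]].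
    + destruct (loc_rot _ _ _ _ _ Hll El) as [a2 [b2 [El' Eb]]]. subst l'.
      eapply (cover_fin d s s' s1 s2 t1 t2 _ (nn r) (nn (cred (a2 ++ e :: (dd ++ c) ++ e :: b2)))); eauto.
      * apply nn_rot. eapply reduce_rot; eauto.
        assert (R := rot_loc a b a2 b2 (e :: (dd ++ c) ++ [e]) Eb). nrm. nrmin R. exact R.
      * apply in_defc_gen. apply in_or_app. left. apply in_map_iff. eexists; split; eauto.
        eapply plaq_enum; eauto.
    + destruct (loc_rot _ _ _ _ _ Hll El) as [a2 [b2 [El' Eb]]]. subst l'.
      eapply (cover_fin d s s' s1 s2 t1 t2 _ (nn r) (nn (cred (a2 ++ e :: rev_inv (dd ++ c) ++ e :: b2)))); eauto.
      * apply nn_rot. eapply reduce_rot; eauto. rewrite rev_inv_app.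
        assert (R := rot_loc a b a2 b2 (e :: (rev_inv c ++ rev_inv dd) ++ [e]) Eb). nrm. nrmin R. exact R.
      * apply in_defc_gen. apply in_or_app. right. apply in_or_app. left.
        apply in_map_iff. eexists; split; eauto. rewrite <- tgt_inv. eapply plaq_enum; eauto.
  - destruct H as [r [[p [Hp Hpl]] Hs']].
    destruct Hpl as [[a [e [b [c [dd [El [Ep Hr]]]]]]]|[a [e [b [c [dd [El [Ep Hr]]]]]]]].
    + destruct (loc_rot _ _ _ _ _ Hll El) as [a2 [b2 [El' Eb]]]. subst l'.
      eapply (cover_fin d s s' s1 s2 t1 t2 _ (nn r) (nn (cred (a2 ++ rev_inv (dd ++ c) ++ b2)))); eauto.
      * apply nn_rot. eapply reduce_rot; eauto. rewrite rev_inv_app.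
        assert (R := rot_loc a b a2 b2 (rev_inv c ++ rev_inv dd) Eb). nrm. nrmin R. exact R.
      * apply in_defc_gen. apply in_or_app. right. apply in_or_app. right. apply in_or_app. left.
        apply in_map_iff. eexists; split; eauto. eapply plaq_enum; eauto.
    + destruct (loc_rot _ _ _ _ _ Hll El) as [a2 [b2 [El' Eb]]]. subst l'.
      eapply (cover_fin d s s' s1 s2 t1 t2 _ (nn r) (nn (cred (a2 ++ (dd ++ c) ++ b2)))); eauto.
      * apply nn_rot. eapply reduce_rot; eauto.
        assert (R := rot_loc a b a2 b2 (dd ++ c) Eb). nrm. nrmin R. exact R.
      * apply in_defc_gen. apply in_or_app. right. apply in_or_app. right. apply in_or_app. right.
        apply in_map_iff. eexists; split; eauto. rewrite <- tgt_inv. eapply plaq_enum; eauto.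
  - destruct H as [r1 [r2 [[lz [a0 [e [b0 [c0 [Hr0 [El0 [Hr1 Hr2]]]]]]]] Hs']]].
    assert (Hl0 : rot_eq lz l') by (eapply rot_trans; [apply rot_sym; eauto | auto]).
    subst lz. replace (s1 ++ nn r1 ++ nn r2 ++ s2) with (s1 ++ (nn r1 ++ nn r2) ++ s2) in Hs' by (rewrite <- app_assoc; auto).
    destruct (split_rot _ _ _ _ _ _ Hl0) as [[a [c [El' Ec]]]|[a [b [c [El' [Ec Eb]]]]]]; subst l'.
    + eapply (cover_fin d s s' s1 s2 t1 t2 _ _ (nn (cred (a ++ e :: c)) ++ nn (cred (b0 ++ [e])))); eauto.
      * apply ls_app; apply nn_rot; eapply reduce_rot; eauto; [|apply rot_refl].
        assert (R := rot_loc a0 c0 a c [e] (eq_sym Ec)). nrm. nrmin R. exact R.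
      * apply in_spl. simpl; auto.
    + eapply (cover_fin d s s' s1 s2 t1 t2 _ _ (nn (cred (b ++ [e])) ++ nn (cred (a ++ e :: c)))); eauto.
      * apply ls_app; apply nn_rot; eapply reduce_rot; eauto.
        -- subst b. assert (R := rot_app (a0 ++ [e]) c0). nrm. nrmin R. exact R.
        -- subst b0. assert (R := rot_app c (a ++ [e])). nrm. nrmin R. exact R.
      * apply in_spl. simpl; auto.
  - destruct H as [r1 [r2 [[lz [a0 [e [b0 [c0 [Hr0 [El0 [Hr1 Hr2]]]]]]]] Hs']]].
    assert (Hl0 : rot_eq lz l') by (eapply rot_trans; [apply rot_sym; eauto | auto]).
    subst lz. replace (s1 ++ nn r1 ++ nn r2 ++ s2) with (s1 ++ (nn r1 ++ nn r2) ++ s2) in Hs' by (rewrite <- app_assoc; auto).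
    destruct (split_rot _ _ _ _ _ _ Hl0) as [[a [c [El' Ec]]]|[a [b [c [El' [Ec Eb]]]]]]; subst l'.
    + eapply (cover_fin d s s' s1 s2 t1 t2 _ _ (nn (cred (a ++ c)) ++ nn (cred b0))); eauto.
      * apply ls_app; apply nn_rot; eapply reduce_rot; eauto; [|apply rot_refl].
        assert (R := rot_loc a0 c0 a c [] (eq_sym Ec)). simpl in R. exact R.
      * apply in_spl. simpl; auto.
    + eapply (cover_fin d s s' s1 s2 t1 t2 _ _ (nn (cred b) ++ nn (cred (a ++ c)))); eauto.
      * apply ls_app; apply nn_rot; eapply reduce_rot; eauto.
        -- subst b. apply rot_app.
        -- subst b0. apply rot_app.
      * apply in_spl. simpl; auto.
Qed.

Open Scope R_scope.

Definition phi (m : nat) : R :=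
  match m with O => 1 | S _ => 64 ^ m / (64 * (INR m) ^ 2) end.

Definition Fw (s : lseq) : R := fold_right (fun l acc => phi (length l) * acc) 1 s.

Definition sumR {A : Type} (f : A -> R) (L : list A) : R := fold_right (fun x acc => f x + acc) 0 L.

Lemma sumR_app : forall A (f : A -> R) L1 L2, sumR f (L1 ++ L2) = sumR f L1 + sumR f L2.
Proof. induction L1; intros; simpl; [lra|]. rewrite IHL1. lra. Qed.

Lemma sumR_map : forall A B (f : B -> R) (g : A -> B) L, sumR f (map g L) = sumR (fun x => f (g x)) L.
Proof. induction L; simpl; auto. rewrite IHL; auto. Qed.

Lemma sumR_flat_map : forall A B (f : B -> R) (g : A -> list B) L,
  sumR f (flat_map g L) = sumR (fun x => sumR f (g x)) L.
Proof. induction L; simpl; auto. rewrite sumR_app, IHL. auto. Qed.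

Lemma sumR_le : forall A (f g : A -> R) L, (forall x, In x L -> f x <= g x) -> sumR f L <= sumR g L.
Proof.
  induction L; intros H; simpl; [lra|].
  apply Rplus_le_compat. apply H; simpl; auto. apply IHL. intros; apply H; simpl; auto.
Qed.

Lemma sumR_nil : forall A (f : A -> R), sumR f [] = 0.
Proof. reflexivity. Qed.

Lemma sumR_cons : forall A (f : A -> R) a L, sumR f (a :: L) = f a + sumR f L.
Proof. reflexivity. Qed.

Lemma sumR_ext : forall A (f g : A -> R) L, (forall x, In x L -> f x = g x) -> sumR f L = sumR g L.
Proof.
  induction L; intros H; auto. rewrite !sumR_cons. rewrite H by (simpl; auto).
  rewrite IHL; auto. intros; apply H; simpl; auto.
Qed.

Lemma sumR_const : forall A (f : A -> R) L M, (forall x, In x L -> f x <= M) -> sumR f L <= INR (length L) * M.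
Proof.
  induction L; intros M H. simpl; lra. rewrite sumR_cons.
  change (length (a :: L)) with (S (length L)). rewrite S_INR. assert (f a <= M) by (apply H; simpl; auto).
  assert (sumR f L <= INR (length L) * M) by (apply IHL; intros; apply H; simpl; auto). lra.
Qed.

Lemma sumR_scal : forall A (f : A -> R) L c, sumR (fun x => c * f x) L = c * sumR f L.
Proof. induction L; intros; simpl; [lra|]. rewrite IHL. lra. Qed.

Lemma sumR_nonneg : forall A (f : A -> R) L, (forall x, In x L -> 0 <= f x) -> 0 <= sumR f L.
Proof.
  induction L; intros H; simpl; [lra|].
  assert (0 <= f a) by (apply H; simpl; auto).
  assert (0 <= sumR f L) by (apply IHL; intros; apply H; simpl; auto). lra.
Qed.

Lemma INR_pos : forall n, (1 <= n)%nat -> 0 < INR n.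
Proof. intros. apply lt_0_INR. lia. Qed.

Lemma phi_S : forall m, (1 <= m)%nat -> phi m = 64 ^ m / (64 * (INR m) ^ 2).
Proof. intros [|m] H; [lia|auto]. Qed.

Lemma phi_step : forall j, phi j <= phi (S j).
Proof.
  intros [|j].
  - simpl. lra.
  - rewrite !phi_S by lia. rewrite (S_INR (S j)).
    set (X := INR (S j)). assert (HX : 1 <= X) by (unfold X; apply (le_INR 1); lia).
    set (P := 64 ^ S j). assert (HP : 0 < P) by (apply pow_lt; lra).
    replace (64 ^ S (S j)) with (64 * P) by (unfold P; simpl; ring).
    assert (E : 64 * P / (64 * (X + 1) ^ 2) - P / (64 * X ^ 2) = P * (64 * X ^ 2 - (X + 1) ^ 2) / (64 * X ^ 2 * (X + 1) ^ 2)).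
    { field. split; lra. }
    assert (0 <= P * (64 * X ^ 2 - (X + 1) ^ 2) / (64 * X ^ 2 * (X + 1) ^ 2)).
    { unfold Rdiv. apply Rmult_le_pos. apply Rmult_le_pos. lra. nra.
      apply Rlt_le, Rinv_0_lt_compat. apply Rmult_lt_0_compat. apply Rmult_lt_0_compat. lra. nra. nra. }
    lra.
Qed.

Lemma phi_mono : forall j t, (j <= t)%nat -> phi j <= phi t.
Proof.
  intros j t H. induction H. lra. eapply Rle_trans. apply IHle. apply phi_step.
Qed.

Lemma phi_ge1 : forall m, 1 <= phi m.
Proof. intros. change 1 with (phi 0). apply phi_mono. lia. Qed.

Lemma phi_pos : forall m, 0 < phi m.
Proof. intros. pose proof (phi_ge1 m). lra. Qed.

Lemma phi4 : forall m, (1 <= m)%nat -> phi (m + 4) <= 64 ^ 4 * phi m.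
Proof.
  intros m H. rewrite !phi_S by lia. rewrite pow_add, plus_INR.
  set (X := INR m). assert (HX : 1 <= X) by (unfold X; apply (le_INR 1); lia).
  set (P := 64 ^ m). assert (HP : 0 < P) by (apply pow_lt; lra).
  simpl INR.
  assert (E : 64 ^ 4 * (P / (64 * X ^ 2)) - P * 64 ^ 4 / (64 * (X + (1+1+1+1)) ^ 2) =
              P * 64 ^ 4 * ((X + 4) ^ 2 - X ^ 2) / (64 * X ^ 2 * (X + 4) ^ 2)).
  { field. split; lra. }
  assert (0 <= P * 64 ^ 4 * ((X + 4) ^ 2 - X ^ 2) / (64 * X ^ 2 * (X + 4) ^ 2)).
  { unfold Rdiv. apply Rmult_le_pos. apply Rmult_le_pos. apply Rmult_le_pos. lra. lra. nra.
    apply Rlt_le, Rinv_0_lt_compat. apply Rmult_lt_0_compat. apply Rmult_lt_0_compat. lra. nra. nra. }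
  lra.
Qed.

Lemma phi_split : forall t u, (1 <= t)%nat -> (1 <= u)%nat ->
  phi t * phi u <= 2 / 64 * phi (t + u) * (/ INR t ^ 2 + / INR u ^ 2).
Proof.
  intros t u Ht Hu. rewrite !phi_S by lia. rewrite pow_add, plus_INR.
  set (X := INR t). assert (HX : 1 <= X) by (unfold X; apply (le_INR 1); lia).
  set (Y := INR u). assert (HY : 1 <= Y) by (unfold Y; apply (le_INR 1); lia).
  set (P := 64 ^ t). assert (HP : 0 < P) by (apply pow_lt; lra).
  set (Q := 64 ^ u). assert (HQ : 0 < Q) by (apply pow_lt; lra).
  assert (E : 2 / 64 * (P * Q / (64 * (X + Y) ^ 2)) * (/ X ^ 2 + / Y ^ 2) - P / (64 * X ^ 2) * (Q / (64 * Y ^ 2))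
     = P * Q * (X - Y) ^ 2 / (64 * 64 * X ^ 2 * Y ^ 2 * (X + Y) ^ 2)).
  { field. repeat split; lra. }
  assert (0 <= P * Q * (X - Y) ^ 2 / (64 * 64 * X ^ 2 * Y ^ 2 * (X + Y) ^ 2)).
  { unfold Rdiv. apply Rmult_le_pos. apply Rmult_le_pos. apply Rmult_le_pos; lra. apply pow2_ge_0.
    apply Rlt_le, Rinv_0_lt_compat. repeat apply Rmult_lt_0_compat; nra. }
  lra.
Qed.

Lemma Fw_app : forall a b, Fw (a ++ b) = Fw a * Fw b.
Proof. induction a; intros; simpl; [lra|]. rewrite IHa. lra. Qed.

Lemma Fw_nonneg : forall s, 0 <= Fw s.
Proof. induction s; simpl; [lra|]. apply Rmult_le_pos; auto. apply Rlt_le, phi_pos. Qed.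

Lemma Fw_nn : forall r, Fw (nn r) = phi (length r).
Proof. intros [|x r]; simpl; lra. Qed.

Lemma Fw_nn_le : forall r t, (length r <= t)%nat -> Fw (nn r) <= phi t.
Proof. intros. rewrite Fw_nn. apply phi_mono; auto. Qed.

Lemma real_S1 : forall x, 0 <= x -> / (x + 1) ^ 2 + 2 / (x + 2) <= 2 / (x + 1).
Proof.
  intros x Hx.
  assert (E : 2 / (x + 1) - (/ (x + 1) ^ 2 + 2 / (x + 2)) = x / ((x + 1) ^ 2 * (x + 2))) by (field; lra).
  assert (0 <= x / ((x + 1) ^ 2 * (x + 2))).
  { unfold Rdiv. apply Rmult_le_pos; auto. apply Rlt_le, Rinv_0_lt_compat. apply Rmult_lt_0_compat; nra. }
  lra.
Qed.

Lemma real_S2 : forall M, 1 <= M -> / (M + 1) ^ 2 + / (M + 1) <= / M.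
Proof.
  intros M HM.
  assert (E : / M - (/ (M + 1) ^ 2 + / (M + 1)) = / (M * (M + 1) ^ 2)) by (field; lra).
  assert (0 <= / (M * (M + 1) ^ 2)) by (apply Rlt_le, Rinv_0_lt_compat; apply Rmult_lt_0_compat; nra).
  lra.
Qed.

Lemma S1 : forall (r : list edge) (B : nat),
  sumR (fun t => / INR (length (fst (fst t)) + 1 + B) ^ 2) (decomps r) <= 2 / INR (B + 1).
Proof.
  induction r as [|x r IH]; intros B; cbn [decomps].
  - rewrite sumR_nil. assert (0 < INR (B + 1)) by (apply INR_pos; lia).
    unfold Rdiv. apply Rmult_le_pos. lra. apply Rlt_le, Rinv_0_lt_compat; auto.
  - rewrite sumR_cons, sumR_map.
    rewrite (sumR_ext _ _ (fun t => / INR (length (fst (fst t)) + 1 + S B) ^ 2)).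
    2:{ intros [[a e] b] _. cbn [fst length]. replace (S (length a) + 1 + B)%nat with (length a + 1 + S B)%nat by lia. reflexivity. }
    assert (H := IH (S B)). simpl length.
    replace (INR (0 + 1 + B)) with (INR B + 1) by (rewrite S_INR; f_equal; lia).
    replace (INR (S B + 1)) with (INR B + 2) in H by (rewrite plus_INR, S_INR; simpl; lra).
    replace (INR (B + 1)) with (INR B + 1) by (rewrite plus_INR; simpl; lra).
    pose proof (real_S1 (INR B) (pos_INR B)). lra.
Qed.

Lemma S2 : forall (r : list edge) (A : nat),
  sumR (fun t => / INR (A + length (snd t) + 1) ^ 2) (decomps r) +
    (match r with [] => 0 | _ => / INR (A + length r) end) <= 2 / INR (A + 1).
Proof.
  assert (HA : forall A, 0 < INR (A + 1)) by (intros; apply INR_pos; lia).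
  induction r as [|x r IH]; intros A.
  - cbn [decomps]. rewrite sumR_nil. specialize (HA A). unfold Rdiv. assert (0 < / INR (A + 1)) by (apply Rinv_0_lt_compat; auto). lra.
  - cbn [decomps]. rewrite sumR_cons, sumR_map.
    rewrite (sumR_ext _ _ (fun t => / INR (A + length (snd t) + 1) ^ 2)).
    2:{ intros [[a e] b] _. simpl. auto. }
    specialize (IH A). simpl snd.
    destruct r as [|y r'].
    + simpl. simpl in IH. rewrite Nat.add_0_r.
      specialize (HA A). set (M := INR (A + 1)) in *.
      assert (/ M ^ 2 <= / M).
      { assert (1 <= M) by (unfold M; apply (le_INR 1); lia).
        apply Rinv_le_contravar; nra. }
      replace (M * (M * 1)) with (M ^ 2) by ring. unfold Rdiv. lra.
    + assert (HM : 1 <= INR (A + length (y :: r'))) by (apply (le_INR 1); simpl; lia).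
      pose proof (real_S2 _ HM).
      assert (E1 : INR (A + length (y :: r') + 1) = INR (A + length (y :: r')) + 1) by (rewrite plus_INR; reflexivity).
      assert (E2 : INR (A + length (x :: y :: r')) = INR (A + length (y :: r')) + 1).
      { rewrite <- E1. f_equal. simpl. lia. }
      rewrite E1, E2.
      lra.
Qed.


Open Scope R_scope.

Definition cst (beta : R) (k : kind) : R :=
  match k with PosDef | NegDef => Rabs beta | _ => 1 end.

Lemma cst_nonneg : forall beta k, 0 <= cst beta k.
Proof. intros beta [| | |]; simpl; try lra; apply Rabs_pos. Qed.

Lemma mult_le4 : forall x X y Y, 0 <= x -> x <= X -> 0 <= y -> y <= Y -> x * y <= X * Y.
Proof. intros. apply Rmult_le_compat; auto. Qed.

Lemma spl4_bound : forall beta a x b c n, (1 <= n)%nat ->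
  sumR (fun kr => cst beta (fst kr) / INR n * Fw (snd kr)) (spl4 a x b c) <=
  4 * (/ INR n * (phi (length b + 1) * phi (length a + length c + 1))).
Proof.
  intros beta a x b c n Hn. unfold spl4. rewrite !sumR_cons, sumR_nil. cbn [fst snd cst].
  rewrite !Fw_app.
  set (T := phi (length b + 1)). set (U := phi (length a + length c + 1)).
  assert (HT : 0 <= T) by (apply Rlt_le, phi_pos). assert (HU : 0 <= U) by (apply Rlt_le, phi_pos).
  assert (B1 : Fw (nn (cred (a ++ x :: c))) <= U).
  { apply Fw_nn_le. eapply Nat.le_trans. apply cred_len. rewrite length_app. simpl. lia. }
  assert (B2 : Fw (nn (cred (b ++ [x]))) <= T).
  { apply Fw_nn_le. eapply Nat.le_trans. apply cred_len. rewrite length_app. simpl. lia. }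
  assert (B3 : Fw (nn (cred (a ++ c))) <= U).
  { apply Fw_nn_le. eapply Nat.le_trans. apply cred_len. rewrite length_app. simpl. lia. }
  assert (B4 : Fw (nn (cred b)) <= T).
  { apply Fw_nn_le. eapply Nat.le_trans. apply cred_len. lia. }
  assert (P1 := mult_le4 _ _ _ _ (Fw_nonneg _) B1 (Fw_nonneg _) B2).
  assert (P2 := mult_le4 _ _ _ _ (Fw_nonneg _) B2 (Fw_nonneg _) B1).
  assert (P3 := mult_le4 _ _ _ _ (Fw_nonneg _) B3 (Fw_nonneg _) B4).
  assert (P4 := mult_le4 _ _ _ _ (Fw_nonneg _) B4 (Fw_nonneg _) B3).
  assert (Hi : 0 < / INR n) by (apply Rinv_0_lt_compat, INR_pos; auto).
  unfold Rdiv. rewrite !Rmult_1_l.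
  assert (forall p, p <= T * U -> / INR n * p <= / INR n * (T * U)) by (intros; apply Rmult_le_compat_l; lra).
  rewrite (Rmult_comm U T) in P1, P3.
  pose proof (H _ P1). pose proof (H _ P2). pose proof (H _ P3). pose proof (H _ P4).
  lra.
Qed.

Lemma sumR_plus : forall A (f g : A -> R) L, sumR (fun x => f x + g x) L = sumR f L + sumR g L.
Proof. induction L; simpl; [lra|]. rewrite IHL. lra. Qed.

Lemma S2' : forall (r : list edge) (A : nat),
  sumR (fun t => / INR (A + length (snd t) + 1) ^ 2) (decomps r) <= 2.
Proof.
  intros. pose proof (S2 r A).
  assert (0 <= match r with [] => 0 | _ => / INR (A + length r) end).
  { destruct r. lra. apply Rlt_le, Rinv_0_lt_compat, INR_pos. simpl; lia. }
  assert (2 / INR (A + 1) <= 2).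
  { assert (1 <= INR (A + 1)) by (apply (le_INR 1); lia).
    unfold Rdiv. assert (/ INR (A + 1) <= 1). { rewrite <- Rinv_1. apply Rinv_le_contravar; lra. } lra. }
  lra.
Qed.

Lemma S1' : forall (r : list edge), sumR (fun t => / INR (length (fst (fst t)) + 1 + 0) ^ 2) (decomps r) <= 2.
Proof.
  intros. pose proof (S1 r 0). simpl in H. replace (2 / 1) with 2 in H by field. auto.
Qed.

Lemma inner_bound : forall beta a x r n, (1 <= n)%nat ->
  sumR (fun u => sumR (fun kr => cst beta (fst kr) / INR n * Fw (snd kr))
          (match u with (b, y, c) => spl4 a x b c end)) (decomps r)
  <= / INR n * phi (length a + length r + 1) * / 2.
Proof.
  intros beta a x r n Hn. set (m := (length a + length r + 1)%nat).
  set (K := 4 * (/ INR n * (2 / 64 * phi m))).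
  eapply Rle_trans. apply sumR_le with (g := fun u => K *
     (/ INR (length (fst (fst u)) + 1 + 0) ^ 2 + / INR (length a + length (snd u) + 1) ^ 2)).
  - intros [[b y] c] Hu. apply decomps_eq in Hu. cbn [fst snd].
    eapply Rle_trans. apply spl4_bound; auto.
    unfold K. rewrite Nat.add_0_r.
    assert (Hs := phi_split (length b + 1) (length a + length c + 1) ltac:(lia) ltac:(lia)).
    replace (length b + 1 + (length a + length c + 1))%nat with m in Hs
      by (unfold m; rewrite Hu, length_app; simpl; lia).
    assert (Hi : 0 < / INR n) by (apply Rinv_0_lt_compat, INR_pos; auto).
    assert (/ INR n * (phi (length b + 1) * phi (length a + length c + 1)) <=
            / INR n * (2 / 64 * phi m * (/ INR (length b + 1) ^ 2 + / INR (length a + length c + 1) ^ 2)))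
      by (apply Rmult_le_compat_l; lra).
    rewrite !Rmult_assoc in *. lra.
  - rewrite sumR_scal, sumR_plus.
    pose proof (S1' r). pose proof (S2' r (length a)).
    assert (HK : 0 <= K).
    { unfold K. assert (0 < / INR n) by (apply Rinv_0_lt_compat, INR_pos; auto).
      pose proof (phi_pos m). apply Rmult_le_pos. lra. apply Rmult_le_pos. lra.
      apply Rmult_le_pos. lra. lra. }
    assert (K * (sumR (fun t => / INR (length (fst (fst t)) + 1 + 0) ^ 2) (decomps r) +
       sumR (fun t => / INR (length a + length (snd t) + 1) ^ 2) (decomps r)) <= K * 4)
      by (apply Rmult_le_compat_l; lra).
    unfold K in *. lra.
Qed.

Definition P3n (d : nat) : nat := (2 * d * (2 * d * (2 * d)))%nat.

Lemma defc_length : forall d l, length (defc d l) = (length l * (4 * P3n d))%nat.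
Proof.
  intros. unfold defc. rewrite (length_flat_map_const _ _ _ _ (4 * P3n d)).
  - rewrite decomps_len. auto.
  - intros [[a e] b]. rewrite !length_app, !length_map, !enum3_length. unfold P3n. lia.
Qed.

Lemma local_bound : forall d beta l n, (1 <= n)%nat -> (length l <= n)%nat ->
  Rabs beta * (4 * INR (P3n d)) * 64 ^ 4 <= / 2 ->
  sumR (fun kr => cst beta (fst kr) / INR n * Fw (snd kr)) (lc d l) <= INR (length l) / INR n * phi (length l).
Proof.
  intros d beta l n Hn Hl Hb.
  destruct l as [|x0 l0].
  - unfold lc, defc, splc. simpl. change (INR 0) with 0. unfold Rdiv. rewrite Rmult_0_l, Rmult_0_l. apply Rle_refl.
  - set (l := x0 :: l0) in *. set (m := length l) in *.
    assert (Hm : (1 <= m)%nat) by (unfold m, l; simpl; lia).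
    assert (Hi : 0 < / INR n) by (apply Rinv_0_lt_compat, INR_pos; auto).
    assert (Hphi := phi_pos m).
    unfold lc. rewrite sumR_app.
    assert (Hdef : sumR (fun kr => cst beta (fst kr) / INR n * Fw (snd kr)) (defc d l) <=
                   INR (length (defc d l)) * (Rabs beta / INR n * (64 ^ 4 * phi m))).
    { apply sumR_const. intros kr Hkr. unfold defc in Hkr. apply in_flat_map in Hkr.
      destruct Hkr as [[[a e] b] [Hd Hkr]]. apply decomps_eq in Hd.
      assert (Hlen : (length a + length b + 1 = m)%nat) by (unfold m; rewrite Hd, length_app; simpl; lia).
      assert (Hq : forall q, (length q <= m + 4)%nat -> Fw (nn (cred q)) <= 64 ^ 4 * phi m).
      { intros q Hq. eapply Rle_trans. apply Fw_nn_le. eapply Nat.le_trans. apply cred_len. exact Hq.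
        apply phi4; auto. }
      assert (Hab : 0 <= Rabs beta / INR n) by (unfold Rdiv; apply Rmult_le_pos; [apply Rabs_pos|lra]).
      repeat rewrite in_app_iff in Hkr.
      destruct Hkr as [Hk|[Hk|[Hk|Hk]]]; apply in_map_iff in Hk; destruct Hk as [w [<- Hw]];
        apply enum3_len in Hw; cbn [fst snd cst]; apply Rmult_le_compat_l; auto; apply Hq;
        rewrite ?length_app; simpl; rewrite ?length_app; unfold rev_inv; rewrite ?length_rev, ?length_map; idtac.
      all: unfold m, l in Hlen; simpl in Hlen, Hw |- *; lia. }
    rewrite defc_length in Hdef.
    assert (Hspl : sumR (fun kr => cst beta (fst kr) / INR n * Fw (snd kr)) (splc l) <=
                   INR (length (decomps l)) * (/ INR n * phi m * / 2)).
    { unfold splc. rewrite sumR_flat_map. apply sumR_const. intros [[a x] r] Ht.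
      apply decomps_eq in Ht. rewrite sumR_flat_map.
      replace m with (length a + length r + 1)%nat by (unfold m; rewrite Ht, length_app; simpl; lia).
      apply inner_bound; auto. }
    rewrite decomps_len in Hspl. fold m in Hspl.
    rewrite mult_INR in Hdef. rewrite mult_INR in Hdef.
    set (M := INR m) in *. set (Pd := INR (P3n d)) in *.
    change (INR (length l)) with M in Hdef.
    assert (HM : 0 <= M) by apply pos_INR.
    assert (E1 : M * (INR 4 * Pd) * (Rabs beta / INR n * (64 ^ 4 * phi m)) =
                 (M * / INR n * phi m) * (Rabs beta * (4 * Pd) * 64 ^ 4)).
    { simpl INR. unfold Rdiv. ring. }
    assert (0 <= M * / INR n * phi m) by (apply Rmult_le_pos; [apply Rmult_le_pos|]; lra).
    assert ((M * / INR n * phi m) * (Rabs beta * (4 * Pd) * 64 ^ 4) <= (M * / INR n * phi m) * / 2)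
      by (apply Rmult_le_compat_l; auto).
    unfold Rdiv. lra.
Qed.

Open Scope R_scope.

Lemma sum_mid : forall s : lseq, sumR (fun t => INR (length (snd (fst t)))) (decomps s) = INR (lsize s).
Proof.
  induction s as [|x s IH]. reflexivity.
  cbn [decomps]. rewrite sumR_cons, sumR_map.
  rewrite (sumR_ext _ _ (fun t => INR (length (snd (fst t))))).
  2:{ intros [[a e] b] _. reflexivity. }
  rewrite IH. simpl. rewrite plus_INR. reflexivity.
Qed.

Lemma Fw_decomp : forall t1 l t2, Fw (t1 ++ l :: t2) = Fw t1 * phi (length l) * Fw t2.
Proof. intros. rewrite Fw_app. simpl. ring. Qed.

Lemma w_abs : forall beta k s, (1 <= lsize s)%nat -> Rabs (w beta k s) = cst beta k / INR (lsize s).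
Proof.
  intros beta k s H. assert (Hn : 0 < INR (lsize s)) by (apply INR_pos; auto).
  destruct k; unfold w, cst, Rdiv; rewrite Rabs_mult, Rabs_inv; rewrite (Rabs_pos_eq (INR _)) by lra;
    rewrite ?Rabs_Ropp, ?Rabs_R1; try reflexivity; replace (Rabs (-1)) with 1 by (rewrite Rabs_left; lra); reflexivity.
Qed.

Lemma lsize_ge : forall t1 l t2, (length l <= lsize (t1 ++ l :: t2))%nat.
Proof. induction t1; intros; simpl; [lia|]. specialize (IHt1 l t2). lia. Qed.

Lemma global_bound : forall d beta s, Rabs beta * (4 * INR (P3n d)) * 64 ^ 4 <= / 2 ->
  sumR (fun c => Rabs (w beta (fst c) s) * Fw (snd c)) (Cands d s) <= Fw s.
Proof.
  intros d beta s Hb. unfold Cands. rewrite sumR_flat_map.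
  set (n := lsize s).
  eapply Rle_trans. apply sumR_le with (g := fun t => INR (length (snd (fst t))) / INR n * Fw s).
  - intros [[t1 l] t2] Ht. apply decomps_eq in Ht. cbn [fst snd]. rewrite sumR_map. cbn [fst snd].
    destruct l as [|x l'].
    + unfold lc, defc, splc. simpl. change (INR 0) with 0. unfold Rdiv. rewrite Rmult_0_l, Rmult_0_l. apply Rle_refl.
    + assert (Hn : (1 <= n)%nat) by (unfold n; rewrite Ht; pose proof (lsize_ge t1 (x :: l') t2); simpl in *; lia).
      rewrite (sumR_ext _ _ (fun kr => (Fw t1 * Fw t2) * (cst beta (fst kr) / INR n * Fw (snd kr)))).
      2:{ intros kr _. rewrite w_abs by auto. fold n. rewrite !Fw_app. unfold lseq in *. unfold Rdiv. ring. }
      rewrite sumR_scal.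
      assert (Hl := local_bound d beta (x :: l') n Hn ltac:(unfold n; rewrite Ht; apply lsize_ge) Hb).
      assert (0 <= Fw t1 * Fw t2) by (apply Rmult_le_pos; apply Fw_nonneg).
      eapply Rle_trans. apply Rmult_le_compat_l; eauto.
      rewrite Ht. rewrite Fw_decomp. apply Req_le. unfold Rdiv. ring.
  - rewrite (sumR_ext _ _ (fun t => (Fw s / INR n) * INR (length (snd (fst t))))).
    2:{ intros. unfold Rdiv. ring. }
    rewrite sumR_scal, sum_mid. fold n.
    destruct (Nat.eq_dec n 0) as [E|E].
    + rewrite E. simpl. rewrite Rmult_0_r. apply Fw_nonneg.
    + assert (0 < INR n) by (apply INR_pos; lia). apply Req_le. field. lra.
Qed.

Lemma FOP_filter : forall A (Rl : A -> A -> Prop) f L, ForallOrdPairs Rl L -> ForallOrdPairs Rl (filter f L).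
Proof.
  induction L; intros H; simpl; auto. inversion H; subst.
  destruct (f a); auto. constructor; auto.
  rewrite Forall_forall in *. intros x Hx. apply filter_In in Hx. apply H2; tauto.
Qed.

Lemma sumR_filter : forall A (val : A -> R) f L,
  sumR val L = sumR val (filter f L) + sumR val (filter (fun x => negb (f x)) L).
Proof.
  induction L. simpl; lra. cbn [filter]. destruct (f a); cbn [negb]; rewrite !sumR_cons, IHL; lra.
Qed.

Lemma group : forall (T X : Type) (C : list X) (val : T -> R) (M : T -> X -> Prop) (bd : X -> R)
  (D : T -> T -> Prop) (Q : T -> Prop),
  (forall c L', (forall t, In t L' -> M t c /\ Q t) -> ForallOrdPairs D L' -> sumR val L' <= bd c) ->
  forall L, (forall t, In t L -> Q t /\ exists c, In c C /\ M t c) -> ForallOrdPairs D L ->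
  sumR val L <= sumR bd C.
Proof.
  intros T X C val M bd D Q Hg. induction C as [|c C IH]; intros L HL HD.
  - destruct L as [|t L]. simpl; lra. exfalso. destruct (HL t) as [_ [c [[] _]]]. simpl; auto.
  - set (f := fun t => if excluded_middle_informative (M t c) then true else false).
    rewrite (sumR_filter _ _ f). rewrite sumR_cons.
    apply Rplus_le_compat.
    + apply Hg. intros t Ht. apply filter_In in Ht. destruct Ht as [Ht Hf].
      unfold f in Hf. destruct (excluded_middle_informative (M t c)); [|discriminate].
      split; auto. apply HL; auto.
      apply FOP_filter; auto.
    + apply IH. intros t Ht. apply filter_In in Ht. destruct Ht as [Ht Hf].
      unfold f in Hf. destruct (excluded_middle_informative (M t c)); [discriminate|].
      destruct (HL t Ht) as [Hq [c' [Hc' Hm]]]. split; auto.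
      destruct Hc' as [<-|Hc']; [contradiction|]. eauto.
      apply FOP_filter; auto.
Qed.

Lemma FOP_map : forall A B (Rl : A -> A -> Prop) (Rl' : B -> B -> Prop) (f : A -> B) L,
  ForallOrdPairs Rl L -> (forall a b, In a L -> In b L -> Rl a b -> Rl' (f a) (f b)) ->
  ForallOrdPairs Rl' (map f L).
Proof.
  induction L; intros H Hf; simpl; constructor; inversion H; subst.
  - rewrite Forall_forall in *. intros y Hy. apply in_map_iff in Hy. destruct Hy as [x [<- Hx]].
    apply Hf; simpl; auto.
  - apply IHL; auto. intros; apply Hf; simpl; auto.
Qed.

Lemma lsize_ls : forall s t, ls_eq s t -> lsize s = lsize t.
Proof. intros s t H. induction H; simpl; auto. rewrite (rot_len _ _ H), IHForall2. auto. Qed.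

Lemma tw_size : forall beta s t st, lsize s = lsize t -> traj_weight beta s st = traj_weight beta t st.
Proof. intros beta s t [|[k s'] st] H; simpl; auto. unfold w. rewrite H. auto. Qed.

Lemma ls_nil_r : forall s, ls_eq s [] -> s = [].
Proof. intros s H. inversion H; auto. Qed.

Lemma vanish_nil : forall d st, vanishing d [] st -> st = [].
Proof.
  intros d [|[k s'] st] H; auto. simpl in H. destruct H as [[s1 [l [s2 [E _]]]] _].
  destruct s1; discriminate.
Qed.

Definition Good (d N : nat) (s : lseq) (L : list (list (kind * lseq))) : Prop :=
  (forall st, In st L -> (length st <= N)%nat /\ exists s0, ls_eq s0 s /\ vanishing d s0 st) /\
  ForallOrdPairs (fun a b => ~ traj_eq a b) L.

Lemma main_bound : forall d beta, Rabs beta * (4 * INR (P3n d)) * 64 ^ 4 <= / 2 ->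
  forall N s L, Good d N s L -> sumR (fun st => Rabs (traj_weight beta s st)) L <= Fw s.
Proof.
  intros d beta Hb. induction N as [|N IH]; intros s L [HL HD].
  - destruct s as [|l s].
    + destruct L as [|st1 [|st2 L]].
      * simpl. lra.
      * destruct (HL st1) as [H1 _]; simpl; auto. destruct st1; [|simpl in H1; lia].
        try rewrite sumR_cons, sumR_nil. simpl. rewrite Rabs_R1. lra.
      * exfalso. inversion HD; subst. inversion H1; subst.
        destruct (HL st1) as [H1' _]; simpl; auto. destruct (HL st2) as [H2' _]; simpl; auto.
        destruct st1; [|simpl in H1'; lia]. destruct st2; [|simpl in H2'; lia]. apply H3. simpl. auto.
    + destruct L as [|st L]. rewrite sumR_nil. apply Fw_nonneg.
      exfalso. destruct (HL st) as [H1 [s0 [Hs0 Hv]]]; simpl; auto.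
      destruct st; [|simpl in H1; lia]. simpl in Hv. subst s0. inversion Hs0.
  - destruct s as [|l s].
    + destruct L as [|st1 [|st2 L]].
      * simpl. lra.
      * destruct (HL st1) as [_ [s0 [Hs0 Hv]]]; simpl; auto.
        apply ls_nil_r in Hs0. subst. apply vanish_nil in Hv. subst.
        try rewrite sumR_cons, sumR_nil. simpl. rewrite Rabs_R1. lra.
      * exfalso. inversion HD; subst. inversion H1; subst.
        destruct (HL st1) as [_ [s0 [Hs0 Hv]]]; simpl; auto.
        destruct (HL st2) as [_ [s0' [Hs0' Hv']]]; simpl; auto.
        apply ls_nil_r in Hs0. apply ls_nil_r in Hs0'. subst.
        apply vanish_nil in Hv. apply vanish_nil in Hv'. subst. apply H3. simpl. auto.
    + set (s1 := l :: s).
      eapply Rle_trans; [|apply (global_bound d beta s1 Hb)].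
      apply (group _ _ (Cands d s1) (fun st => Rabs (traj_weight beta s1 st))
        (fun st c => exists s' st', st = (fst c, s') :: st' /\ ls_eq s' (snd c))
        (fun c => Rabs (w beta (fst c) s1) * Fw (snd c))
        (fun a b => ~ traj_eq a b)
        (fun st => (length st <= S N)%nat /\ exists s0, ls_eq s0 s1 /\ vanishing d s0 st)); auto.
      * intros c L' HL' HD'.
        rewrite (sumR_ext _ _ (fun st => Rabs (w beta (fst c) s1) * Rabs (traj_weight beta (snd c) (tl st)))).
        2:{ intros st Hst. destruct (HL' st Hst) as [[s' [st' [-> Hs']]] _]. simpl.
            rewrite Rabs_mult. f_equal. f_equal. apply tw_size. apply lsize_ls; auto. }
        rewrite sumR_scal. apply Rmult_le_compat_l. apply Rabs_pos.
        rewrite <- (sumR_map _ _ (fun t => Rabs (traj_weight beta (snd c) t)) (@tl _)).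
        apply IH. split.
        -- intros t Ht. apply in_map_iff in Ht. destruct Ht as [st [<- Hst]].
           destruct (HL' st Hst) as [[s' [st' [-> Hs']]] [Hlen [s0 [_ Hv]]]].
           simpl in *. split. lia. exists s'. split; auto. tauto.
        -- apply FOP_map with (Rl := fun a b => ~ traj_eq a b); auto.
           intros a b Ha Hb' Hab Htl. apply Hab.
           destruct (HL' a Ha) as [[sa [sta [-> Hsa]]] _].
           destruct (HL' b Hb') as [[sb [stb [-> Hsb]]] _].
           simpl in *. split; auto. split; auto. eapply ls_trans; eauto. apply ls_sym; auto.
      * intros st Hst. destruct (HL st Hst) as [Hlen [s0 [Hs0 Hv]]]. split; auto.
        destruct st as [|[k s'] st'].
        -- simpl in Hv. subst s0. inversion Hs0.
        -- destruct Hv as [Hstep _].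
           destruct (coverage d k s0 s1 s' Hs0 Hstep) as [c [Hc [Hk Hs']]].
           exists c. split; auto. exists s', st'. subst k. auto.
Qed.

Open Scope R_scope.

Lemma max_len : forall (L : list (list (kind * lseq))) st, In st L ->
  (length st <= fold_right (fun x m => Nat.max (length x) m) 0%nat L)%nat.
Proof. induction L; intros st H; simpl in *; [contradiction|]. destruct H; subst; [lia|]. specialize (IHL _ H). lia. Qed.

Theorem theorem11p1 : forall d : nat, (2 <= d)%nat ->
  exists beta2 : R, 0 < beta2 /\
    forall beta : R, Rabs beta <= beta2 ->
    forall s : lseq, is_lseq d s -> s <> nil -> summable_traj d beta s.
Proof.
  intros d _.
  set (P := INR (P3n d)). assert (HP : 0 <= P) by apply pos_INR.
  assert (H64 : 0 < 64 ^ 4) by (apply pow_lt; lra).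
  exists (/ (2 * ((4 * P + 1) * 64 ^ 4))). split.
  - apply Rinv_0_lt_compat. apply Rmult_lt_0_compat. lra. apply Rmult_lt_0_compat; lra.
  - intros beta Hbeta s _ _.
    assert (Hb : Rabs beta * (4 * P) * 64 ^ 4 <= / 2).
    { assert (Hpos : 0 < 2 * ((4 * P + 1) * 64 ^ 4)) by (apply Rmult_lt_0_compat; [lra|apply Rmult_lt_0_compat; lra]).
      assert (E : / (2 * ((4 * P + 1) * 64 ^ 4)) * (4 * P) * 64 ^ 4 = / 2 * (4 * P / (4 * P + 1))) by (field; lra).
      assert (4 * P / (4 * P + 1) <= 1).
      { apply (Rmult_le_reg_r (4 * P + 1)). lra. unfold Rdiv. rewrite Rmult_assoc, Rinv_l by lra. lra. }
      assert (Rabs beta * (4 * P) * 64 ^ 4 <= / (2 * ((4 * P + 1) * 64 ^ 4)) * (4 * P) * 64 ^ 4).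
      { apply Rmult_le_compat_r. lra. apply Rmult_le_compat_r. lra. auto. }
      assert (0 < / 2) by lra. nra. }
    exists (Fw s). intros L HL HD.
    change (sumR (fun st => Rabs (traj_weight beta s st)) L <= Fw s).
    apply (main_bound d beta Hb (fold_right (fun x m => Nat.max (length x) m) 0%nat L)).
    split; auto. intros st Hst. split. apply max_len; auto.
    exists s. split; auto. apply ls_refl.
Qed.
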